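(* Let $v_1,\dots,v_m$ be distinct values and $S_1,\dots,S_n$ set variables. Enforcing BC on $\mathrm{Precedence}([v_1,\dots,v_m],[S_1,\dots,S_n])$ is strictly stronger than enforcing BC on each of the constraints $\mathrm{Precedence}([v_i,v_j],[S_1,\dots,S_n])$ for $1\le i<j\le m$. That is: (i) for all bounds, if $\mathrm{Precedence}([v_1,\dots,v_m],[S_1,\dots,S_n])$ is BC then every $\mathrm{Precedence}([v_i,v_j],[S_1,\dots,S_n])$ with $i<j$ is BC; and (ii) there exist bounds for which every $\mathrm{Precedence}([v_i,v_j],[S_1,\dots,S_n])$ with $1\le i<j\le m$ is BC but $\mathrm{Precedence}([v_1,\dots,v_m],[S_1,\dots,S_n])$ is not BC.
   Context: A set variable $S$ has a lower bound $lb(S)$ and an upper bound $ub(S)$ (finite sets of integers with $lb(S)\subseteq ub(S)$); its possible values are the sets $T$ with $lb(S)\subseteq T\subseteq ub(S)$. A bound support of a constraint is an assignment to each set variable of a set between its bounds that satisfies the constraint. A constraint is bound consistent (BC) iff for each set variable $S$, every value in $ub(S)$ belongs to $S$ in at least one bound support and every value in $lb(S)$ belongs to $S$ in all bound supports. For set variables and distinct values $a,b$, $\mathrm{Precedence}([a,b],[S_1,\dots,S_n])$ holds iff $\min\{i \mid (a\in S_i \wedge b\notin S_i)\text{ or } i=n+1\} < \min\{i \mid (b\in S_i\wedge a\notin S_i) \text{ or } i=n+2\}$. $\mathrm{Precedence}([v_1,\dots,v_m],[S_1,\dots,S_n])$ holds iff $\mathrm{Precedence}([v_j,v_k],[S_1,\dots,S_n])$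 holds for all $1\le j<k\le m$. *)

(* Defs.v *)
From mathcomp Require Import all_boot all_order all_algebra.
Set Implicit Arguments. Unset Strict Implicit. Unset Printing Implicit Defensive.

(* Values are integers; a (finite) set of integers is represented by a
   sequence [seq int] read extensionally via membership [\in].
   An assignment to the set variables S_1..S_n is a list of n such sets. *)

Definition subset_int (A B : seq int) : Prop := {subset A <= B}.

Definition constraint := seq (seq int) -> Prop.

Definition wf_bounds (lb ub : seq (seq int)) : Prop :=
  size lb = size ub /\
  forall i, i < size ub -> subset_int (nth [::] lb i) (nth [::] ub i).

Definition within_bounds (lb ub X : seq (seq int)) : Prop :=
  size X = size ub /\
  forall i, i < size ub ->
    subset_int (nth [::] lb i) (nth [::] X i) /\
    subset_int (nth [::] X i) (nth [::] ub i).

Definition bound_support (C : constraint) (lb ub X : seq (seq int)) : Prop :=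
  within_bounds lb ub X /\ C X.

Definition BC (C : constraint) (lb ub : seq (seq int)) : Prop :=
  forall i, i < size ub ->
    (forall v, v \in nth [::] ub i ->
       exists X, bound_support C lb ub X /\ v \in nth [::] X i) /\
    (forall v, v \in nth [::] lb i ->
       forall X, bound_support C lb ub X -> v \in nth [::] X i).

(* Precedence([a,b],[S_1..S_n]):
   min{i | (a ∈ S_i ∧ b ∉ S_i) or i = n+1}
     < min{i | (b ∈ S_i ∧ a ∉ S_i) or i = n+2}   (1-based indices). *)
Definition first_a (a b : int) (S : seq (seq int)) : nat :=
  (find (fun s => (a \in s) && (b \notin s)) S).+1.

Definition first_b (a b : int) (S : seq (seq int)) : nat :=
  if has (fun s => (b \in s) && (a \notin s)) S
  then (find (fun s => (b \in s) && (a \notin s)) S).+1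
  else (size S).+2.

Definition Precedence2 (a b : int) (S : seq (seq int)) : Prop :=
  first_a a b S < first_b a b S.

(* Precedence([v_1..v_m],[S_1..S_n]) : all pairs j < k (0-based here). *)
Definition Precedence (vs : seq int) (S : seq (seq int)) : Prop :=
  forall j k, j < k -> k < size vs -> Precedence2 (nth (0 : int) vs j) (nth (0 : int) vs k) S.

(* Main.v *)
Require Import Defs.
From mathcomp Require Import all_boot all_order all_algebra.

Lemma lb_part (C : constraint) lb ub i v :
  i < size ub -> v \in nth [::] lb i ->
  forall X, bound_support C lb ub X -> v \in nth [::] X i.
Proof. move=> Hi Hv X [[_ HX] _]; exact: (proj1 (HX i Hi)). Qed.

Lemma BC_of (C : constraint) lb ub :
  (forall i v, i < size ub -> v \in nth [::] ub i ->
     exists X, bound_support C lb ub X /\ v \in nth [::] X i) -> BC C lb ub.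
Proof.
move=> H i Hi; split; first by move=> v; exact: H.
by move=> v Hv; apply: lb_part.
Qed.

Lemma sub_all (A B : seq int) : all (mem B) A -> subset_int A B.
Proof. by move=> /allP H x /H. Qed.

Definition LB : seq (seq int) := [:: [:: (Posz 1); (Posz 3)]; [::]].
Definition UB : seq (seq int) := [:: [:: (Posz 1); (Posz 2); (Posz 3)]; [:: (Posz 2)]].
Definition VS : seq int := [:: (Posz 1); (Posz 2); (Posz 3)].

Lemma wb (X : seq (seq int)) :
  (if X is [:: x1; x2] then
     [&& all (mem x1) (nth [::] LB 0), all (mem (nth [::] UB 0)) x1,
         all (mem x2) (nth [::] LB 1) & all (mem (nth [::] UB 1)) x2]
   else false) -> within_bounds LB UB X.
Proof.
case: X => [|x1 [|x2 [|? ?]]] // /and4P [h1 h2 h3 h4]; split => // -[|[|i]] // _.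
  by split; apply: sub_all.
by split; apply: sub_all.
Qed.

Lemma ex_sup (C : constraint) X i v :
  C X -> (if X is [:: x1; x2] then
     [&& all (mem x1) (nth [::] LB 0), all (mem (nth [::] UB 0)) x1,
         all (mem x2) (nth [::] LB 1) & all (mem (nth [::] UB 1)) x2]
   else false) -> v \in nth [::] X i ->
  exists X, bound_support C LB UB X /\ v \in nth [::] X i.
Proof. move=> HC Hw Hv; exists X; split => //; split => //; exact: wb. Qed.

Theorem theorem6 :
  (forall (vs : seq int) (lb ub : seq (seq int)),
     uniq vs -> wf_bounds lb ub ->
     BC (Precedence vs) lb ub ->
     forall i j, i < j -> j < size vs ->
       BC (Precedence2 (nth (0 : int) vs i) (nth (0 : int) vs j)) lb ub)
  /\
  (exists (vs : seq int) (lb ub : seq (seq int)),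
     [/\ uniq vs, wf_bounds lb ub,
         (forall i j, i < j -> j < size vs ->
            BC (Precedence2 (nth (0 : int) vs i) (nth (0 : int) vs j)) lb ub)
       & ~ BC (Precedence vs) lb ub]).
Proof.
split.
  move=> vs lb ub _ _ HB i j Hij Hj; apply: BC_of => k v Hk Hv.
  have [H1 _] := HB k Hk; have [X [[Hw HP] HX]] := H1 v Hv.
  by exists X; split => //; split => //; apply: HP.
exists VS, LB, UB; split => //.
- split => // -[|[|i]] //= _; exact: sub_all.
- move=> i j Hij Hj; apply: BC_of => k v Hk Hv.
  move: Hk Hv; case: k => [|[|k]] //= _; rewrite !inE;
  case: i j Hij Hj => [|[|[|i]]] [|[|[|[|j]]]] //= _ _.
  all: try (case/or3P => /eqP ->).
  all: try (move=> /eqP ->).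
  all: try first [ by apply: (@ex_sup _ [:: [:: (Posz 1); (Posz 2); (Posz 3)]; [:: (Posz 2)]]); compute
             | by apply: (@ex_sup _ [:: [:: (Posz 1); (Posz 2); (Posz 3)]; [::]]); compute
             | by apply: (@ex_sup _ [:: [:: (Posz 1); (Posz 3)]; [:: (Posz 2)]]); compute ].
- move=> HB; have [H1 _] := HB 1 isT.
  have [X [[[HsX HX] HP] Hv]] := H1 (Posz 2) (mem_head _ _).
  case: X HsX HX HP Hv => [|x1 [|x2 [|? ?]]] //= _ HX HP Hv.
  have [[L0 U0] [L1 U1]] := (HX 0 isT, HX 1 isT); rewrite /= in L0 U0 L1 U1.
  have h1 : ((Posz 1) \in x1) by apply: L0; rewrite !inE.
  have h3 : ((Posz 3) \in x1) by apply: L0; rewrite !inE.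
  have n1 : ((Posz 1) \in x2) = false by apply/negP => /U1; rewrite !inE.
  have n3 : ((Posz 3) \in x2) = false by apply/negP => /U1; rewrite !inE.
  case h2: ((Posz 2) \in x1).
    have := HP 0 1 isT isT.
    by rewrite /Precedence2 /first_a /first_b /= h1 h2 Hv n1.
  have := HP 1 2 isT isT.
  by rewrite /Precedence2 /first_a /first_b /= h3 h2 Hv n3.
Qed.
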